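(* Let $n\ge 3$. Let $\pi$ be a permutation of $\{1,\dots,n\}$ containing the pattern $321$ exactly once, and let $c>b>a$ be the values of that unique occurrence, so that $\pi$ can be written as the concatenation $\pi=\pi_1\, c\, \pi_2\, b\, \pi_3\, a\, \pi_4$ of (possibly empty) words $\pi_1,\pi_2,\pi_3,\pi_4$ and the letters $c,b,a$. Then every entry of $\pi$ to the left of $b$ other than $c$ is smaller than $b$, and every entry to the right of $b$ other than $a$ is larger than $b$. Consequently $\sigma_1:=\pi_1\, b\, \pi_2\, a$ is a $321$-avoiding permutation of $\{1,\dots,b\}$ whose last letter is not $b$, and $\sigma_2:=c\,\pi_3\, b\,\pi_4$ is a $321$-avoiding permutation of $\{b,\dots,n\}$ whose first letter is not $b$. Moreover, the map $\pi\mapsto(b,\sigma_1,\sigma_2)$ is a bijection from the set of permutations of $\{1,\dots,n\}$ containing $321$ exactly once onto the set of triples $(b,\sigma_1,\sigma_2)$ with $2\le b\le n-1$, $\sigma_1$ a $321$-avoiding permutation of $\{1,\dots,b\}$ not ending with $b$, and $\sigma_2$ a $321$-avoiding permutation of $\{b,\dots,n\}$ not starting with $b$.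
   Context: Permutations are written in one-line notation as words; a permutation of a finite set of integers $S$ is a word using each element of $S$ exactly once. Such a word $w=w_1\cdots w_m$ contains an occurrence of the pattern $321$ if there are positions $i<j<k$ with $w_i>w_j>w_k$; it is $321$-avoiding if there is no such triple; it contains $321$ exactly once if there is exactly one such triple of positions. *)

(* Defs.v *)
(* Permutations are words (seq nat); positions are 0-based. *)
From mathcomp Require Import all_boot.
Set Implicit Arguments. Unset Strict Implicit. Unset Printing Implicit Defensive.

Definition occ321 (w : seq nat) : seq (nat * nat * nat) :=
  [seq t <- flatten [seq flatten [seq [seq (i, j, k) | k <- iota 0 (size w)]
                                  | j <- iota 0 (size w)]
                    | i <- iota 0 (size w)]
   | [&& t.1.1 < t.1.2, t.1.2 < t.2,
         nth 0 w t.1.2 < nth 0 w t.1.1 & nth 0 w t.2 < nth 0 w t.1.2]].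

Definition avoids321 (w : seq nat) : bool := occ321 w == [::].
Definition once321 (w : seq nat) : bool := size (occ321 w) == 1.

Definition slice (w : seq nat) (m p : nat) : seq nat := take (p - m) (drop m w).

(* pi = pi1 c pi2 b pi3 a pi4 with c,b,a at positions i,j,k *)
(* sigma1 = pi1 b pi2 a *)
Definition sigma1 (pi : seq nat) (i j k : nat) : seq nat :=
  take i pi ++ [:: nth 0 pi j] ++ slice pi i.+1 j ++ [:: nth 0 pi k].
(* sigma2 = c pi3 b pi4 *)
Definition sigma2 (pi : seq nat) (i j k : nat) : seq nat :=
  [:: nth 0 pi i] ++ slice pi j.+1 k ++ [:: nth 0 pi j] ++ drop k.+1 pi.

(* The map pi |-> (b, sigma1, sigma2), read off from the (first, and for
   pi containing 321 exactly once, unique) occurrence of 321. *)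
Definition phi (pi : seq nat) : nat * seq nat * seq nat :=
  let: (i, j, k) := head (0, 0, 0) (occ321 pi) in
  (nth 0 pi j, sigma1 pi i j k, sigma2 pi i j k).

Definition once321_perm (n : nat) (pi : seq nat) : Prop :=
  perm_eq pi (iota 1 n) /\ once321 pi.

Definition triple_ok (n : nat) (t : nat * seq nat * seq nat) : Prop :=
  let: (b, s1, s2) := t in
  [/\ 2 <= b <= n - 1,
      [/\ perm_eq s1 (iota 1 b), avoids321 s1 & last 0 s1 != b]
    & [/\ perm_eq s2 (iota b (n - b + 1)), avoids321 s2 & head 0 s2 != b]].

(* Main.v *)
Require Import Defs.
From mathcomp Require Import all_boot zify.
Set Implicit Arguments. Unset Strict Implicit. Unset Printing Implicit Defensive.

Lemma flatten_uniq_key (S T : eqType) (key : T -> S) (F : S -> seq T) (s : seq S) :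
  uniq s -> (forall x, x \in s -> uniq (F x)) ->
  (forall x t, t \in F x -> key t = x) -> uniq (flatten [seq F x | x <- s]).
Proof.
move=> + HF Hk; elim: s HF => //= x s IH HF /andP[xs us].
rewrite cat_uniq HF ?mem_head //= IH // ?andbT; last by move=> y ys; apply: HF; rewrite inE ys orbT.
apply/hasPn => t /flatten_mapP [y ys ty]; apply/negP => tx.
by move: xs; rewrite -(Hk _ _ tx) (Hk _ _ ty) ys.
Qed.

Lemma occ_uniq w : uniq (occ321 w).
Proof.
rewrite /occ321; apply: filter_uniq.
apply: (@flatten_uniq_key _ _ (fun t => t.1.1)); first exact: iota_uniq.
  move=> i0 _; apply: (@flatten_uniq_key _ _ (fun t => t.1.2)); first exact: iota_uniq.
    move=> j0 _; rewrite map_inj_uniq ?iota_uniq //; by move=> a b [].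
  by move=> j0 t /mapP [k0 _ ->].
by move=> i0 t /flatten_mapP [j0 _ /mapP [k0 _ ->]].
Qed.

Lemma occP w i j k : ((i,j,k) \in occ321 w) =
  [&& i < j, j < k, k < size w, nth 0 w j < nth 0 w i & nth 0 w k < nth 0 w j].
Proof.
rewrite /occ321 mem_filter /=.
have -> : (i, j, k) \in flatten [seq flatten [seq [seq (i, j, k) | k <- iota 0 (size w)]
                                  | j <- iota 0 (size w)] | i <- iota 0 (size w)]
   = [&& i < size w, j < size w & k < size w].
  apply/idP/idP.
    move=> /flatten_mapP [i' /[!mem_iota] hi /flatten_mapP [j' /[!mem_iota] hj /mapP [k' /[!mem_iota] hk [-> -> ->]]]].
    by rewrite /= !add0n in hi hj hk; rewrite hi hj hk.
  move=> /and3P [hi hj hk]; apply/flatten_mapP; exists i; first by rewrite mem_iota.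
  apply/flatten_mapP; exists j; first by rewrite mem_iota.
  by apply/mapP; exists k; rewrite ?mem_iota.
apply/idP/idP.
  move=> /andP [/and4P [a1 a2 a3 a4] /and3P[hi hj hk]]; by rewrite a1 a2 hk a3 a4.
move=> /and5P [a1 a2 hk a3 a4]; rewrite a1 a2 a3 a4 hk !andbT /=.
apply/andP; split; apply: (ltn_trans _ hk) => //; exact: ltn_trans a2.
Qed.

Definition V (w : seq nat) x y z := [&& x \in w, y \in w, z \in w, z < y, y < x,
  index x w < index y w & index y w < index z w].

Lemma V_occ w x y z : V w x y z -> (index x w, index y w, index z w) \in occ321 w.
Proof.
rewrite /V => /and5P [xw yw zw zy /andP [yx /andP [i1 i2]]].
by rewrite occP i1 i2 index_mem zw (nth_index 0 xw) (nth_index 0 yw) (nth_index 0 zw) zy yx.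
Qed.

Lemma occ_V w i j k : uniq w -> (i,j,k) \in occ321 w ->
  V w (nth 0 w i) (nth 0 w j) (nth 0 w k).
Proof.
move=> uw; rewrite occP => /and5P [a1 a2 a3 a4 a5].
have hj : j < size w by apply: ltn_trans a3.
have hi : i < size w by apply: ltn_trans hj.
by rewrite /V !mem_nth // !index_uniq // a1 a2 a4 a5.
Qed.

Lemma avoidsP w : uniq w -> avoids321 w <-> (forall x y z, ~~ V w x y z).
Proof.
move=> uw; rewrite /avoids321; split.
  by move=> /eqP e x y z; apply/negP => /V_occ; rewrite e.
move=> h; case e: (occ321 w) => [|[[i j] k] s] //.
have : (i,j,k) \in occ321 w by rewrite e mem_head.
by move=> /(occ_V uw); rewrite (negbTE (h _ _ _)).
Qed.

Lemma onceP w i j k : uniq w -> (occ321 w = [:: (i,j,k)]) <->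
  ((i,j,k) \in occ321 w /\ forall x y z, V w x y z ->
      [/\ x = nth 0 w i, y = nth 0 w j & z = nth 0 w k]).
Proof.
move=> uw; split.
  move=> e; rewrite e mem_head; split => // x y z hV.
  have := V_occ hV; rewrite e inE => /eqP [ex ey ez].
  move: hV => /and3P [xw yw /andP [zw _]].
  by rewrite -ex -ey -ez !nth_index.
move=> [hin hU].
have hall : forall t, t \in occ321 w -> t = (i,j,k).
  move=> [[p q] r] ht; have := occ_V uw ht => hV.
  have [e1 e2 e3] := hU _ _ _ hV.
  move: ht; rewrite occP => /and5P [a1 a2 a3 _ _].
  have hq : q < size w by apply: ltn_trans a3.
  have hp : p < size w by apply: ltn_trans hq.
  move: hin; rewrite occP => /and5P [b1 b2 b3 _ _].
  have hj : j < size w by apply: ltn_trans b3.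
  have hi : i < size w by apply: ltn_trans hj.
  move/eqP: e1; move/eqP: e2; move/eqP: e3.
  by rewrite !nth_uniq // => /eqP-> /eqP-> /eqP->.
have us := occ_uniq w.
have hs : size (occ321 w) <= 1.
  have -> : 1 = size [:: (i,j,k)] by [].
  apply: uniq_leq_size => // t /hall ->; exact: mem_head.
case e: (occ321 w) hs hin => [|t [|t' s]] //.
by move=> _; rewrite inE => /eqP <-.
Qed.


Lemma uniq_count_le (s t : seq nat) : uniq t ->
  (forall x, count_mem x s <= count_mem x t) -> uniq s.
Proof.
move=> ut h; apply: count_mem_uniq => x; have := h x; rewrite (count_uniq_mem x ut).
have := has_count (pred1 x) s; rewrite has_pred1 => ->.
by case: (x \in t); case: (count _ s) => [|[|m]].
Qed.

Lemma idx_mid (A B C : seq nat) v : v \in B -> uniq (A ++ B ++ C) ->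
  index v (A ++ B ++ C) = size A + index v B.
Proof.
move=> vB; rewrite cat_uniq => /and3P [_ hn _].
have vA : v \notin A.
  apply/negP => vA; move/hasPn: hn => /(_ v); rewrite mem_cat vB => /(_ isT).
  by rewrite vA.
by rewrite index_cat (negbTE vA) index_cat vB.
Qed.

Lemma mkV w x y z : x \in w -> y \in w -> z \in w -> z < y -> y < x ->
  index x w < index y w -> index y w < index z w -> V w x y z.
Proof. by move=> *; apply/and5P; split => //; apply/and3P. Qed.

Lemma VE w x y z : V w x y z -> x \in w /\ y \in w /\ z \in w /\ z < y /\ y < x /\
  index x w < index y w /\ index y w < index z w.
Proof. by move=> /and5P [-> -> -> -> /and3P [-> -> ->]]. Qed.

Ltac clean := repeat match goal with
 | H : is_true (uniq _) |- _ => clear H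
 | H : is_true (all _ _) |- _ => clear H
 | H : is_true (_ \in _) |- _ => clear H
 | H : _ = _ :> seq nat |- _ => clear H
 end.
Ltac slia := clean; lia.

Definition Wd (p1 p2 p3 p4 : seq nat) c b a := p1 ++ c :: p2 ++ b :: p3 ++ a :: p4.
Definition S1d (p1 p2 : seq nat) b a := p1 ++ b :: p2 ++ [:: a].
Definition S2d (p3 p4 : seq nat) c b := c :: p3 ++ b :: p4.

Lemma key (p1 p2 p3 p4 : seq nat) (c b a : nat) :
  uniq (Wd p1 p2 p3 p4 c b a) ->
  all (fun v => v < b) p1 -> all (fun v => v < b) p2 -> a < b -> b < c ->
  all (fun v => b < v) p3 -> all (fun v => b < v) p4 ->
  [/\ uniq (S1d p1 p2 b a), uniq (S2d p3 p4 c b) &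
  ((forall x y z, V (Wd p1 p2 p3 p4 c b a) x y z -> [/\ x = c, y = b & z = a]) <->
   ((forall x y z, ~~ V (S1d p1 p2 b a) x y z) /\ (forall x y z, ~~ V (S2d p3 p4 c b) x y z)))].
Proof.
rewrite /Wd /S1d /S2d => uW h1 h2 hab hbc h3 h4.
have uS1 : uniq (p1 ++ b :: p2 ++ [:: a]).
  apply: (uniq_count_le uW) => x; do 4 rewrite ?count_cat /=; slia.
have uS2 : uniq (c :: p3 ++ b :: p4).
  apply: (uniq_count_le uW) => x; do 4 rewrite ?count_cat /=; slia.
have eW1 : p1 ++ c :: p2 ++ b :: p3 ++ a :: p4 = [::] ++ p1 ++ (c :: p2 ++ b :: p3 ++ a :: p4) by [].
have eWc : p1 ++ c :: p2 ++ b :: p3 ++ a :: p4 = p1 ++ [:: c] ++ (p2 ++ b :: p3 ++ a :: p4) by [].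
have eW2 : p1 ++ c :: p2 ++ b :: p3 ++ a :: p4 = (p1 ++ [:: c]) ++ p2 ++ (b :: p3 ++ a :: p4) by rewrite -catA.
have eWb : p1 ++ c :: p2 ++ b :: p3 ++ a :: p4 = (p1 ++ c :: p2) ++ [:: b] ++ (p3 ++ a :: p4) by rewrite -catA.
have eW3 : p1 ++ c :: p2 ++ b :: p3 ++ a :: p4 = (p1 ++ c :: p2 ++ [:: b]) ++ p3 ++ (a :: p4) by rewrite -catA /= -catA.
have eWa : p1 ++ c :: p2 ++ b :: p3 ++ a :: p4 = (p1 ++ c :: p2 ++ b :: p3) ++ [:: a] ++ p4 by rewrite -catA /= -catA.
have eW4 : p1 ++ c :: p2 ++ b :: p3 ++ a :: p4 = (p1 ++ c :: p2 ++ b :: p3 ++ [:: a]) ++ p4 ++ [::] by rewrite cats0 -catA /= -catA /= -catA.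
pose W := p1 ++ c :: p2 ++ b :: p3 ++ a :: p4.
have iW1 : forall v, v \in p1 -> index v W = index v p1.
  by move=> v hv; rewrite /W eW1 idx_mid // -eW1.
have iWc : index c W = size p1.
  by rewrite /W eWc idx_mid ?mem_head -?eWc //= eqxx addn0.
have iW2 : forall v, v \in p2 -> index v W = size p1 + 1 + index v p2.
  by move=> v hv; rewrite /W eW2 idx_mid -?eW2 // size_cat.
have iWb : index b W = size p1 + 1 + size p2.
  by rewrite /W eWb idx_mid ?mem_head -?eWb //= eqxx addn0 size_cat /= addnS addn1.
have iW3 : forall v, v \in p3 -> index v W = size p1 + 1 + size p2 + 1 + index v p3.
  move=> v hv; rewrite /W eW3 idx_mid -?eW3 //; do 3 rewrite ?size_cat /=; slia.
have iWa : index a W = size p1 + 1 + size p2 + 1 + size p3.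
  rewrite /W eWa idx_mid ?mem_head -?eWa //= eqxx addn0; do 3 rewrite ?size_cat /=; slia.
have iW4 : forall v, v \in p4 -> index v W = size p1 + 1 + size p2 + 1 + size p3 + 1 + index v p4.
  move=> v hv; rewrite /W eW4 idx_mid -?eW4 //; do 3 rewrite ?size_cat /=; slia.
pose S1 := p1 ++ b :: p2 ++ [:: a].
have eS1 : S1 = [::] ++ p1 ++ (b :: p2 ++ [:: a]) by [].
have eS1b : S1 = p1 ++ [:: b] ++ (p2 ++ [:: a]) by [].
have eS12 : S1 = (p1 ++ [:: b]) ++ p2 ++ [:: a] by rewrite /S1 -catA.
have eS1a : S1 = (p1 ++ b :: p2) ++ [:: a] ++ [::] by rewrite /S1 -catA.
have iS11 : forall v, v \in p1 -> index v S1 = index v p1.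
  by move=> v hv; rewrite eS1 idx_mid // -eS1.
have iS1b : index b S1 = size p1.
  by rewrite eS1b idx_mid ?mem_head -?eS1b //= eqxx addn0.
have iS12 : forall v, v \in p2 -> index v S1 = size p1 + 1 + index v p2.
  by move=> v hv; rewrite eS12 idx_mid -?eS12 // size_cat.
have iS1a : index a S1 = size p1 + 1 + size p2.
  rewrite eS1a idx_mid ?mem_head -?eS1a //= eqxx addn0; do 3 rewrite ?size_cat /=; slia.
pose S2 := c :: p3 ++ b :: p4.
have eS23 : S2 = [:: c] ++ p3 ++ (b :: p4) by [].
have eS2b : S2 = (c :: p3) ++ [:: b] ++ p4 by [].
have eS24 : S2 = (c :: p3 ++ [:: b]) ++ p4 ++ [::] by rewrite cats0 /S2 /= -catA.
have iS2c : index c S2 = 0 by rewrite /= eqxx.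
have iS23 : forall v, v \in p3 -> index v S2 = 1 + index v p3.
  by move=> v hv; rewrite eS23 idx_mid -?eS23.
have iS2b : index b S2 = 1 + size p3.
  by rewrite eS2b idx_mid ?mem_head -?eS2b //= eqxx addn0.
have iS24 : forall v, v \in p4 -> index v S2 = 1 + size p3 + 1 + index v p4.
  move=> v hv; rewrite eS24 idx_mid -?eS24 //; do 3 rewrite ?size_cat /=; slia.
rewrite -/W -/S1 -/S2.
have cW : c \in W by rewrite /W !(mem_cat, inE) eqxx !orbT.
have aW : a \in W by rewrite /W !(mem_cat, inE) eqxx !orbT.
have bS1 : b \in S1 by rewrite /S1 !(mem_cat, inE) eqxx !orbT.
have bS2 : b \in S2 by rewrite /S2 !(mem_cat, inE) eqxx !orbT.
pose i := size p1.
have clW : forall v, v \in W ->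
   (v < b /\ v \in S1 /\ ((index v W < size p1 + 1 + size p2 /\ index v S1 = index v W /\ index v W <> size p1)
      \/ (v = a /\ index v W = size p1 + 1 + size p2 + 1 + size p3 /\ index v S1 = size p1 + 1 + size p2)))
 \/ (v = b /\ index v W = size p1 + 1 + size p2)
 \/ (b < v /\ v \in S2 /\ ((v = c /\ index v W = size p1 /\ index v S2 = 0)
      \/ (size p1 + 1 + size p2 < index v W /\ index v S2 + (size p1 + 1 + size p2) = index v W))).
  move=> v; rewrite /W mem_cat => /orP [hv|].
    have hs : index v p1 < size p1 by rewrite index_mem.
    left; split; first exact: (allP h1).
    split; first by rewrite /S1 mem_cat hv.
    by left; rewrite iW1 // iS11 //; slia.
  rewrite inE => /orP [/eqP ->|].
    right; right; split => //; split; first by rewrite /S2 mem_head.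
    by left; rewrite iWc iS2c.
  rewrite mem_cat => /orP [hv|].
    have hs : index v p2 < size p2 by rewrite index_mem.
    left; split; first exact: (allP h2).
    split; first by rewrite /S1 !(mem_cat, inE) hv !orbT.
    by left; rewrite iW2 // iS12 //; slia.
  rewrite inE => /orP [/eqP ->|].
    by right; left.
  rewrite mem_cat => /orP [hv|].
    have hs : index v p3 < size p3 by rewrite index_mem.
    right; right; split; first exact: (allP h3).
    split; first by rewrite /S2 !(mem_cat, inE) hv !orbT.
    by right; rewrite iW3 // iS23 //; slia.
  rewrite inE => /orP [/eqP ->|].
    by left; split => //; split; [rewrite /S1 !(mem_cat, inE) eqxx !orbT | right].
  move=> hv; have hs : index v p4 < size p4 by rewrite index_mem.
  right; right; split; first exact: (allP h4).
  split; first by rewrite /S2 !(mem_cat, inE) hv !orbT.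
  by right; rewrite iW4 // iS24 //; slia.
have clS1 : forall v, v \in S1 -> (v = b /\ index v S1 = size p1) \/
   (v < b /\ v \in W /\ ((index v W < size p1 + 1 + size p2 /\ index v S1 = index v W /\ index v W <> size p1)
      \/ (v = a /\ index v W = size p1 + 1 + size p2 + 1 + size p3 /\ index v S1 = size p1 + 1 + size p2))).
  move=> v; rewrite /S1 mem_cat => /orP [hv|].
    have hs : index v p1 < size p1 by rewrite index_mem.
    right; split; first exact: (allP h1).
    split; first by rewrite /W mem_cat hv.
    by left; rewrite iW1 // iS11 //; slia.
  rewrite inE => /orP [/eqP ->|]; first by left.
  rewrite mem_cat => /orP [hv|].
    have hs : index v p2 < size p2 by rewrite index_mem.
    right; split; first exact: (allP h2).
    split; first by rewrite /W !(mem_cat, inE) hv !orbT.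
    by left; rewrite iW2 // iS12 //; slia.
  rewrite inE => /eqP ->; right; split => //; split; first by rewrite /W !(mem_cat, inE) eqxx !orbT.
  by right.
have clS2 : forall v, v \in S2 -> (v = b /\ index v S2 = 1 + size p3) \/
   (b < v /\ v \in W /\ ((v = c /\ index v W = size p1 /\ index v S2 = 0)
      \/ (size p1 + 1 + size p2 < index v W /\ index v S2 + (size p1 + 1 + size p2) = index v W))).
  move=> v; rewrite /S2 inE => /orP [/eqP ->|].
    right; split => //; split => //.
    by left; rewrite iWc iS2c.
  rewrite mem_cat => /orP [hv|].
    have hs : index v p3 < size p3 by rewrite index_mem.
    right; split; first exact: (allP h3).
    split; first by rewrite /W !(mem_cat, inE) hv !orbT.
    by right; rewrite iW3 // iS23 //; slia.
  rewrite inE => /orP [/eqP ->|]; first by left.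
  move=> hv; have hs : index v p4 < size p4 by rewrite index_mem.
  right; split; first exact: (allP h4).
  split; first by rewrite /W !(mem_cat, inE) hv !orbT.
  by right; rewrite iW4 // iS24 //; slia.
split => //; split.
  move=> U; split => x y z; apply/negP.
    move=> /VE [xS [yS [zS [zy [yx [i1 i2]]]]]].
    case: (clS1 x xS) => [[xb ix] | [xl [xW xr]]];
    case: (clS1 y yS) => [[yb iy] | [yl [yW yr]]];
    case: (clS1 z zS) => [[zb iz] | [zl [zW zr]]];
    first [ slia
          | (have hV : V W c y z by apply: mkV => //; slia); have [] := U _ _ _ hV; slia
          | (have hV : V W x y z by apply: mkV => //; slia); have [] := U _ _ _ hV; slia ].
  move=> /VE [xS [yS [zS [zy [yx [i1 i2]]]]]].
  case: (clS2 x xS) => [[xb ix] | [xl [xW xr]]];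
  case: (clS2 y yS) => [[yb iy] | [yl [yW yr]]];
  case: (clS2 z zS) => [[zb iz] | [zl [zW zr]]];
  first [ slia
        | (have hV : V W x y a by apply: mkV => //; slia); have [] := U _ _ _ hV; slia
        | (have hV : V W x y z by apply: mkV => //; slia); have [] := U _ _ _ hV; slia ].
move=> [A1 A2] x y z /VE [xS [yS [zS [zy [yx [i1 i2]]]]]].
case: (clW x xS) => [[xl [xS1 xr]] | [[xb ix] | [xh [xS2 xr]]]];
case: (clW y yS) => [[yl [yS1 yr]] | [[yb iy] | [yh [yS2 yr]]]];
case: (clW z zS) => [[zl [zS1 zr]] | [[zb iz] | [zh [zS2 zr]]]];
first [ slia
      | (split; slia)
      | (have hV : V S1 x y z by apply: mkV => //; slia); by have := negP (A1 _ _ _) hV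
      | (have hV : V S1 b y z by apply: mkV => //; slia); by have := negP (A1 _ _ _) hV
      | (have hV : V S2 x y z by apply: mkV => //; slia); by have := negP (A2 _ _ _) hV
      | (have hV : V S2 x y b by apply: mkV => //; slia); by have := negP (A2 _ _ _) hV ].
Qed.


Lemma decomp (w : seq nat) i j k : i < j -> j < k -> k < size w ->
  w = Wd (take i w) (slice w i.+1 j) (slice w j.+1 k) (drop k.+1 w)
         (nth 0 w i) (nth 0 w j) (nth 0 w k).
Proof.
move=> hij hjk hk.
have e1 : w = take i w ++ nth 0 w i :: drop i.+1 w.
  by rewrite -(drop_nth 0) ?cat_take_drop //; slia.
have hj : j < size w by slia.
have e2 : drop i.+1 w = slice w i.+1 j ++ nth 0 w j :: drop j.+1 w.
  rewrite /slice -(drop_nth 0 hj).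
  have -> : drop j w = drop (j - i.+1) (drop i.+1 w) by rewrite drop_drop subnK.
  by rewrite cat_take_drop.
have e3 : drop j.+1 w = slice w j.+1 k ++ nth 0 w k :: drop k.+1 w.
  rewrite /slice -(drop_nth 0 hk).
  have -> : drop k w = drop (k - j.+1) (drop j.+1 w) by rewrite drop_drop subnK.
  by rewrite cat_take_drop.
by rewrite /Wd {1}e1 e2 e3.
Qed.

Lemma size_slice (w : seq nat) m p : m <= p -> p <= size w -> size (slice w m p) = p - m.
Proof. move=> h1 h2; rewrite /slice size_takel // size_drop; slia. Qed.

Lemma mid_facts (A B : seq nat) x :
  [/\ nth 0 (A ++ x :: B) (size A) = x, take (size A) (A ++ x :: B) = A
    & drop (size A).+1 (A ++ x :: B) = B].
Proof.
split; first by rewrite nth_cat ltnn subnn.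
  by rewrite take_size_cat.
by rewrite -cat_rcons drop_size_cat // size_rcons.
Qed.

Lemma blocks p1 p2 p3 p4 c b a i j k :
  i = size p1 -> j = size p1 + 1 + size p2 -> k = size p1 + 1 + size p2 + 1 + size p3 ->
  let W := Wd p1 p2 p3 p4 c b a in
  [/\ (i, j, k) \in occ321 W = (b < c) && (a < b),
      nth 0 W j = b,
      sigma1 W i j k = S1d p1 p2 b a,
      sigma2 W i j k = S2d p3 p4 c b &
      [/\ nth 0 W i = c, nth 0 W k = a & size W = k + 1 + size p4]].
Proof.
move=> hi hj hk W.
have eW1 : W = p1 ++ c :: (p2 ++ b :: p3 ++ a :: p4) by [].
have eW2 : W = (p1 ++ c :: p2) ++ b :: (p3 ++ a :: p4) by rewrite /W /Wd -catA.
have eW3 : W = (p1 ++ c :: p2 ++ b :: p3) ++ a :: p4 by rewrite /W /Wd -catA /= -catA.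
have sz1 : size (p1 ++ c :: p2) = j by rewrite size_cat /=; slia.
have sz2 : size (p1 ++ c :: p2 ++ b :: p3) = k by rewrite size_cat /= size_cat /=; slia.
have [nc t1 d1] := mid_facts p1 (p2 ++ b :: p3 ++ a :: p4) c.
have [nb t2 d2] := mid_facts (p1 ++ c :: p2) (p3 ++ a :: p4) b.
have [na t3 d3] := mid_facts (p1 ++ c :: p2 ++ b :: p3) p4 a.
rewrite -eW1 -hi in nc t1 d1; rewrite -eW2 sz1 in nb t2 d2; rewrite -eW3 sz2 in na t3 d3.
have szW : size W = k + 1 + size p4 by rewrite eW3 size_cat /= sz2; slia.
have s2 : slice W i.+1 j = p2.
  by rewrite /slice d1 (_ : j - i.+1 = size p2); [rewrite take_size_cat | slia].
have s3 : slice W j.+1 k = p3.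
  by rewrite /slice d2 (_ : k - j.+1 = size p3); [rewrite take_size_cat | slia].
split => //.
- rewrite occP nb nc na szW.
  have -> : i < j by slia.
  have -> : j < k by slia.
  have -> : k < k + 1 + size p4 by slia.
  by [].
- by rewrite /sigma1 t1 nb s2 na.
- by rewrite /sigma2 nc s3 nb d3.
Qed.


Lemma memS (p1 p2 p3 p4 : seq nat) (c b a : nat) :
  all (fun v => v < b) p1 -> all (fun v => v < b) p2 -> a < b -> b < c ->
  all (fun v => b < v) p3 -> all (fun v => b < v) p4 ->
  forall v, (v \in S1d p1 p2 b a) = (v \in Wd p1 p2 p3 p4 c b a) && (v <= b) /\
            (v \in S2d p3 p4 c b) = (v \in Wd p1 p2 p3 p4 c b a) && (b <= v).
Proof.
move=> h1 h2 hab hbc h3 h4 v.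
have := allP h1 v; have := allP h2 v; have := allP h3 v; have := allP h4 v.
rewrite /S1d /S2d /Wd !(mem_cat, inE).
case: (v \in p1); case: (v \in p2); case: (v \in p3); case: (v \in p4) => /= H4 H3 H2 H1;
  clear h1 h2 h3 h4; lia.
Qed.

Lemma part1 n (pi : seq nat) (i j k : nat) : perm_eq pi (iota 1 n) -> occ321 pi = [:: (i,j,k)] ->
  let b := nth 0 pi j in
  let s1 := sigma1 pi i j k in
  let s2 := sigma2 pi i j k in
  (forall p, p < j -> p != i -> nth 0 pi p < b) /\
  (forall p, j < p < n -> p != k -> b < nth 0 pi p) /\
  (perm_eq s1 (iota 1 b) /\ avoids321 s1 /\ last 0 s1 != b) /\
  (perm_eq s2 (iota b (n - b + 1)) /\ avoids321 s2 /\ head 0 s2 != b).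
Proof.
move=> hp ho b s1 s2.
have up : uniq pi by rewrite (perm_uniq hp) iota_uniq.
have szp : size pi = n by rewrite (perm_size hp) size_iota.
have memp : forall v, (v \in pi) = (1 <= v < n.+1).
  by move=> v; rewrite (perm_mem hp) mem_iota add1n.
have hin : (i,j,k) \in occ321 pi by rewrite ho mem_head.
move: (hin); rewrite occP => /and5P [hij hjk hk hbc hab].
move: (hk); rewrite szp => hkn.
have occ_eq : forall p q r, (p,q,r) \in occ321 pi -> p = i /\ q = j /\ r = k.
  by move=> p q r; rewrite ho inE => /eqP [-> -> ->].
have hjs : j < size pi by (try rewrite szp; slia).
have P1 : forall p, p < j -> p != i -> nth 0 pi p < b.
  move=> p hpj hpi; case: (ltngtP (nth 0 pi p) b) => // h.
    have := occ_eq p j k; rewrite occP hpj hjk hk h hab => /(_ isT) [e _].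
    by move: hpi; rewrite e eqxx.
  move/eqP: h; rewrite /b nth_uniq //; try (move/eqP => e); (try rewrite szp; slia).
have P2 : forall p, j < p < n -> p != k -> b < nth 0 pi p.
  move=> p /andP [hjp hpn] hpk; case: (ltngtP b (nth 0 pi p)) => // h.
    have hps : p < size pi by (try rewrite szp; slia).
    have := occ_eq i j p; rewrite occP hij hjp hps h hbc => /(_ isT) [_ [_ e]].
    by move: hpk; rewrite e eqxx.
  move/eqP: h; rewrite /b nth_uniq //; try (move/eqP => e); (try rewrite szp; slia).
have eW := decomp hij hjk hk.
have sz1 : size (take i pi) = i by rewrite size_takel //; (try rewrite szp; slia).
have sz2 : size (slice pi i.+1 j) = j - i.+1 by rewrite size_slice //; (try rewrite szp; slia).
have sz3 : size (slice pi j.+1 k) = k - j.+1 by rewrite size_slice //; (try rewrite szp; slia).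
have sz4 : size (drop k.+1 pi) = size pi - k.+1 by rewrite size_drop.
have h1 : all (fun v => v < b) (take i pi).
  apply/allP => v hv; have hq : index v (take i pi) < size (take i pi) by rewrite index_mem.
  rewrite -(nth_index 0 hv); move: hq; move: (index v _) => q hq; rewrite sz1 in hq.
  rewrite nth_take //; apply: P1; slia.
have h2 : all (fun v => v < b) (slice pi i.+1 j).
  apply/allP => v hv; have hq : index v (slice pi i.+1 j) < size (slice pi i.+1 j) by rewrite index_mem.
  rewrite -(nth_index 0 hv); move: hq; move: (index v _) => q hq; rewrite sz2 in hq.
  rewrite /slice nth_take // nth_drop; apply: P1; slia.
have h3 : all (fun v => b < v) (slice pi j.+1 k).
  apply/allP => v hv; have hq : index v (slice pi j.+1 k) < size (slice pi j.+1 k) by rewrite index_mem.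
  rewrite -(nth_index 0 hv); move: hq; move: (index v _) => q hq; rewrite sz3 in hq.
  rewrite /slice nth_take // nth_drop; apply: P2; slia.
have h4 : all (fun v => b < v) (drop k.+1 pi).
  apply/allP => v hv; have hq : index v (drop k.+1 pi) < size (drop k.+1 pi) by rewrite index_mem.
  rewrite -(nth_index 0 hv); move: hq; move: (index v _) => q hq; rewrite sz4 szp in hq.
  rewrite nth_drop; apply: P2; slia.
have uW : uniq (Wd (take i pi) (slice pi i.+1 j) (slice pi j.+1 k) (drop k.+1 pi)
         (nth 0 pi i) (nth 0 pi j) (nth 0 pi k)) by rewrite -eW.
have [uS1 uS2 [KU _]] := key uW h1 h2 hab hbc h3 h4.
have [_ hU] := (onceP i j k up).1 ho.
have [A1 A2] : (forall x y z, ~~ V s1 x y z) /\ (forall x y z, ~~ V s2 x y z).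
  by apply: KU => x y z; rewrite -eW; apply: hU.
have mS := memS h1 h2 hab hbc h3 h4.
have bn : b < n.+1 by move: (mem_nth 0 hjs); rewrite memp => /andP [_ ?].
split => //; split => //; split; [split; [|split] | split; [|split]].
- apply: uniq_perm => //; first exact: iota_uniq.
  move=> v; rewrite (mS v).1 -eW memp mem_iota; (try rewrite szp; slia).
- by apply/(avoidsP uS1).
- by rewrite /s1 /sigma1 !last_cat /= neq_ltn hab.
- apply: uniq_perm => //; first exact: iota_uniq.
  move=> v; rewrite (mS v).2 -eW memp mem_iota; (try rewrite szp; slia).
- by apply/(avoidsP uS2).
- by rewrite /s2 /sigma2 /= neq_ltn hbc orbT.
Qed.


Lemma uniq_mid (p q : seq nat) x : uniq (p ++ x :: q) -> x \notin p /\ x \notin q.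
Proof. by rewrite cat_uniq /= => /and3P [_ /norP [hp _] /andP [hq _]]. Qed.

Lemma split_eq (p q p' q' : seq nat) x : x \notin p -> x \notin p' ->
  p ++ x :: q = p' ++ x :: q' -> p = p' /\ q = q'.
Proof.
move=> hp hp' e.
have hs : size p = size p'.
  have := congr1 (index x) e; rewrite !index_cat (negbTE hp) (negbTE hp') /= eqxx.
  by rewrite !addn0.
have [_ t1 d1] := mid_facts p q x.
have [_ t2 d2] := mid_facts p' q' x.
by split; [rewrite -t1 -t2 e hs | rewrite -d1 -d2 e hs].
Qed.

Lemma struct n (pi : seq nat) : once321_perm n pi ->
  exists p1 p2 p3 p4 c b a, [/\ pi = Wd p1 p2 p3 p4 c b a,
     phi pi = (b, S1d p1 p2 b a, S2d p3 p4 c b), b \notin p1 & b \notin p3].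
Proof.
case=> hp; rewrite /once321; case e: (occ321 pi) => [|[[i j] k] [|]] // _.
have [_ [_ [[P1 _] [P2 _]]]] := part1 hp e.
have us1 : uniq (sigma1 pi i j k) by rewrite (perm_uniq P1) iota_uniq.
have us2 : uniq (sigma2 pi i j k) by rewrite (perm_uniq P2) iota_uniq.
have hin : (i,j,k) \in occ321 pi by rewrite e mem_head.
move: hin; rewrite occP => /and5P [hij hjk hk _ _].
exists (take i pi), (slice pi i.+1 j), (slice pi j.+1 k), (drop k.+1 pi),
  (nth 0 pi i), (nth 0 pi j), (nth 0 pi k).
split; first exact: decomp.
- by rewrite /phi e.
- by have [] := uniq_mid us1.
- by move: us2 => /= /andP [_ /uniq_mid []].
Qed.

Lemma part2 n (pi : seq nat) : once321_perm n pi -> triple_ok n (phi pi).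
Proof.
case=> hp; rewrite /once321; case e: (occ321 pi) => [|[[i j] k] [|]] // _.
have [_ [_ [[P1 [A1 L1]] [P2 [A2 H2]]]]] := part1 hp e.
rewrite /phi e /=.
split => //.
have := perm_size P1; have := perm_size P2; rewrite !size_iota /sigma1 /sigma2.
rewrite !size_cat /=; lia.
Qed.

Lemma part3 n (pi pi' : seq nat) : once321_perm n pi -> once321_perm n pi' ->
  phi pi = phi pi' -> pi = pi'.
Proof.
move=> /struct [p1 [p2 [p3 [p4 [c [b [a [-> -> hb1 hb3]]]]]]]].
move=> /struct [p1' [p2' [p3' [p4' [c' [b' [a' [-> -> hb1' hb3']]]]]]]].
case=> eb; rewrite -{}eb in hb1' hb3' * => e1 [ec e2]; rewrite -{}ec in e2 *.
have [-> e1'] := split_eq hb1 hb1' e1.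
move: e1'; rewrite !cats1 => /rcons_inj [-> ->].
by have [-> ->] := split_eq hb3 hb3' e2.
Qed.


Ltac clearP := repeat match goal with H : ?T |- _ => lazymatch type of T with Prop => clear H end end.
Ltac hlia H := move: (H); clearP; lia.

Lemma part4 n t : triple_ok n t -> exists pi, once321_perm n pi /\ phi pi = t.
Proof.
case: t => [[b s1] s2] [hb [P1 A1 L1] [P2 A2 H2]].
have us1 : uniq s1 by rewrite (perm_uniq P1) iota_uniq.
have us2 : uniq s2 by rewrite (perm_uniq P2) iota_uniq.
have m1 : forall v, (v \in s1) = (1 <= v <= b) by move=> v; rewrite (perm_mem P1) mem_iota; slia.
have m2 : forall v, (v \in s2) = (b <= v <= n) by move=> v; rewrite (perm_mem P2) mem_iota; slia.
have bs1 : b \in s1 by rewrite m1; slia.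
have bs2 : b \in s2 by rewrite m2; slia.
move: us1 m1 A1 L1 P1; case/splitPr: bs1 => p1 q.
case/lastP: q => [|p2 a]; first by rewrite last_cat /= eqxx.
move=> us1 m1 A1 L1 P1.
move: us2 m2 A2 H2 P2; case: s2 bs2 => [//|d r] bs2 us2 m2 A2 H2 P2.
have br : b \in r by move: bs2; rewrite inE eq_sym (negbTE H2).
move: us2 m2 A2 P2; case/splitPr: br => p3 p4 us2 m2 A2 P2.
have [nb1 nbq] := uniq_mid us1.
move: us2 => /= /andP [_ /uniq_mid [nb3 nb4]].
have hm1 : forall v, v \in p1 ++ b :: rcons p2 a -> v != b -> v < b.
  move=> v hv hvb; move: hv; rewrite m1; slia.
have hm2 : forall v, v \in d :: p3 ++ b :: p4 -> v != b -> b < v.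
  move=> v hv hvb; move: hv; rewrite m2; slia.
have h1 : all (fun v => v < b) p1.
  apply/allP => v hv; apply: hm1; first by rewrite mem_cat hv.
  by apply/eqP => e; move: nb1; rewrite -e hv.
have h2 : all (fun v => v < b) p2.
  apply/allP => v hv; apply: hm1; first by rewrite !(mem_cat, inE, mem_rcons) hv !orbT.
  by apply/eqP => e; move: nbq; rewrite -e mem_rcons inE hv orbT.
have hab : a < b.
  apply: hm1; first by rewrite !(mem_cat, inE, mem_rcons) eqxx !orbT.
  by apply/eqP => e; move: nbq; rewrite -e mem_rcons inE eqxx.
have hbd : b < d by apply: hm2; rewrite ?mem_head // eq_sym.
have h3 : all (fun v => b < v) p3.
  apply/allP => v hv; apply: hm2; first by rewrite !(mem_cat, inE) hv !orbT.
  by apply/eqP => e; move: nb3; rewrite -e hv.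
have h4 : all (fun v => b < v) p4.
  apply/allP => v hv; apply: hm2; first by rewrite !(mem_cat, inE) hv !orbT.
  by apply/eqP => e; move: nb4; rewrite -e hv.
pose W := Wd p1 p2 p3 p4 d b a.
have hW : perm_eq W (iota 1 n).
  rewrite -(perm_cons b).
  have e1 : perm_eq (b :: W) ((p1 ++ b :: rcons p2 a) ++ (d :: p3 ++ b :: p4)).
    apply/permP => P; rewrite /W /Wd -cats1.
    do 5 rewrite ?count_cat /=; clearP; lia.
  apply: (perm_trans e1); apply: (perm_trans (perm_cat P1 P2)).
  have eb : iota 1 b = iota 1 (b - 1) ++ [:: b].
    have e : b = (b - 1) + 1 by hlia hb.
    by rewrite {1}e iotaD /=; congr (_ ++ [:: _]); hlia hb.
  have en : iota 1 n = iota 1 (b - 1) ++ iota b (n - b + 1).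
    have e : n = (b - 1) + (n - b + 1) by hlia hb.
    by rewrite {1}e iotaD; congr (_ ++ iota _ _); hlia hb.
  rewrite eb en; apply/permP => P; do 3 rewrite ?count_cat /=; clearP; lia.
have uW : uniq W by rewrite (perm_uniq hW) iota_uniq.
have [hin hnb _ _ [hnc hna _]] := blocks p4 d b a (erefl (size p1)) (erefl (size p1 + 1 + size p2))
   (erefl (size p1 + 1 + size p2 + 1 + size p3)).
have [uS1 uS2 [_ KU]] := key uW h1 h2 hab hbd h3 h4.
have ho : occ321 W = [:: (size p1, size p1 + 1 + size p2, size p1 + 1 + size p2 + 1 + size p3)].
  apply/(onceP _ _ _ uW); split; first by rewrite hin hbd hab.
  move=> x y z hV; rewrite hnc hnb hna; apply: KU => //; split.
    by apply: (avoidsP uS1).1; rewrite /S1d cats1.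
  by apply: (avoidsP uS2).1.
exists W; split; first by split => //; rewrite /once321 ho.
have [_ nb s1e s2e _] := blocks p4 d b a (erefl (size p1)) (erefl (size p1 + 1 + size p2))
   (erefl (size p1 + 1 + size p2 + 1 + size p3)).
by rewrite /phi ho /= nb s1e s2e /S1d cats1.
Qed.

Theorem mainTheorem2 (n : nat) (hn : 3 <= n) :
  (forall (pi : seq nat) (i j k : nat),
      perm_eq pi (iota 1 n) -> occ321 pi = [:: (i, j, k)] ->
      let b := nth 0 pi j in
      let s1 := sigma1 pi i j k in
      let s2 := sigma2 pi i j k in
      (forall p, p < j -> p != i -> nth 0 pi p < b) /\
      (forall p, j < p < n -> p != k -> b < nth 0 pi p) /\
      (perm_eq s1 (iota 1 b) /\ avoids321 s1 /\ last 0 s1 != b) /\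
      (perm_eq s2 (iota b (n - b + 1)) /\ avoids321 s2 /\ head 0 s2 != b)) /\
  (forall pi, once321_perm n pi -> triple_ok n (phi pi)) /\
  (forall pi pi', once321_perm n pi -> once321_perm n pi' ->
      phi pi = phi pi' -> pi = pi') /\
  (forall t, triple_ok n t -> exists pi, once321_perm n pi /\ phi pi = t).
Proof.
split; first by move=> pi i j k hp ho; exact: part1 hp ho.
split; first by move=> pi; exact: part2.
split; first by move=> pi pi'; exact: part3.
by move=> t; exact: part4.
Qed.
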